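(* (Deterministic error bounds, exact sparsity.) Let $\hat\Gamma\in\mathbb R^{q\times q}$ be symmetric positive semidefinite, $\hat\gamma\in\mathbb R^q$, and $\beta^*\in\mathbb R^q$. Let $J=\mathrm{supp}(\beta^* )$ with $|J|=k$ and $J^C\ne\emptyset$. Let $w_j\ge0$ be weights with $\min_{j\in J^C}w_j=1$, and set $r_w=\max_{j\in J}w_j$ (with value $0$ if $J=\emptyset$). Let $\lambda>0$, and let $\hat\beta$ be any minimizer of $-2\beta'\hat\gamma+\beta'\hat\Gamma\beta+\lambda\sum_j w_j|\beta_j|$. Suppose the following hold: - $\|\hat\gamma-\hat\Gamma\beta^*\|_\infty\le\lambda/4$; - there exist $\alpha>0$ and $\tau\ge0$ with $\theta'\hat\Gamma\theta\ge\alpha\|\theta\|_2^2-\tau\|\theta\|_1^2$ for all $\theta\in\mathbb R^q$; - $4(1+r_w)^2k\tau\le\alpha/2$. Then $$\|\hat\beta-\beta^*\|_2\le\frac{1+2r_w}{\alpha}\sqrt k\,\lambda,\qquad \|\hat\beta-\beta^*\|_1\le\frac{2+6r_w+4r_w^2}{\alpha}k\lambda,$$ $$(\hat\beta-\beta^* )'\hat\Gamma(\hat\beta-\beta^* )\le\frac{(1+2r_w)^2}{2\alpha}k\lambda^2 .$$ If $J\ne\emptyset$ and $s_0=\min_{j\in J}|\beta^*_j|$, then $$|\mathrm{supp}(\beta^* )\setminus\mathrm{supp}(\hat\beta)|\le\frac{2+6r_w+4r_w^2}{s_0\alpha}k\lambda .$$ Finally, for $\tilde\beta_j=\hat\beta_j\mathbf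 1(|\hat\beta_j|>\lambda)$, $$|\mathrm{supp}(\tilde\beta)\setminus\mathrm{supp}(\beta^* )|\le(1+2r_w)^2k/\alpha .$$
   Context: $\|\cdot\|_1,\|\cdot\|_2,\|\cdot\|_\infty$ are the usual vector norms and $\mathrm{supp}(v)=\{j:v_j\neq0\}$. *)

(* Defs.v *)
From HB Require Import structures.
From mathcomp Require Import all_boot all_order all_algebra.
From mathcomp Require Import reals.
Set Implicit Arguments. Unset Strict Implicit. Unset Printing Implicit Defensive.
Import Order.TTheory GRing.Theory Num.Theory.
Local Open Scope ring_scope.

Definition norm1 {R : realType} {q : nat} (v : 'cV[R]_q) : R :=
  \sum_(j < q) `|v j 0|.
Definition norm2 {R : realType} {q : nat} (v : 'cV[R]_q) : R :=
  Num.sqrt (\sum_(j < q) v j 0 ^+ 2).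
Definition norminf {R : realType} {q : nat} (v : 'cV[R]_q) : R :=
  \big[Num.max/0]_(j < q) `|v j 0|.
Definition supp {R : realType} {q : nat} (v : 'cV[R]_q) : {set 'I_q} :=
  [set j | v j 0 != 0].
Definition qform {R : realType} {q : nat} (G : 'M[R]_q) (v : 'cV[R]_q) : R :=
  (v^T *m G *m v) 0 0.
Definition dotv {R : realType} {q : nat} (u v : 'cV[R]_q) : R := (u^T *m v) 0 0.
Definition lasso_obj {R : realType} {q : nat} (G : 'M[R]_q) (g : 'cV[R]_q)
  (w : 'I_q -> R) (lam : R) (b : 'cV[R]_q) : R :=
  - 2 * dotv b g + qform G b + lam * \sum_(j < q) w j * `|b j 0|.
Definition hthresh {R : realType} {q : nat} (lam : R) (b : 'cV[R]_q) : 'cV[R]_q :=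
  \col_j (if lam < `|b j 0| then b j 0 else 0).

(* Main.v *)
Require Import Defs.
From HB Require Import structures.
From mathcomp Require Import all_boot all_order all_algebra.
From mathcomp Require Import reals lra ring.
Import Order.TTheory GRing.Theory Num.Theory.
Local Open Scope ring_scope.



Section H.
Variables (R : realType) (q : nat).
Implicit Types (u v a b : 'cV[R]_q).

Lemma dotvE u v : dotv u v = \sum_j u j 0 * v j 0.
Proof. by rewrite /dotv !mxE; apply: eq_bigr => j _; rewrite mxE. Qed.

Lemma qform_add (G : 'M[R]_q) a b : G^T = G ->
  qform G (a + b) = qform G a + 2 * dotv b (G *m a) + qform G b.
Proof.
move=> GT; have cross : (a^T *m G *m b) 0 0 = (b^T *m (G *m a)) 0 0.
  have e : (a^T *m G *m b)^T 0 0 = (a^T *m G *m b) 0 0 by rewrite mxE.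
  by rewrite -e !trmx_mul trmxK GT mulmxA.
rewrite /qform /dotv [(a+b)^T]linearD /= !mulmxDl !mulmxDr.
set A := a^T *m G *m a; set B := a^T *m G *m b; set C := b^T *m G *m a.
set D := b^T *m G *m b.
have -> : C = b^T *m (G *m a) by rewrite /C mulmxA.
move: cross; rewrite !mxE => ->; lra.
Qed.

Lemma dotvD u v b : dotv (u + v) b = dotv u b + dotv v b.
Proof. by rewrite !dotvE -big_split; apply: eq_bigr => j _; rewrite mxE mulrDl. Qed.

Lemma CS (J : {set 'I_q}) (x : 'I_q -> R) :
  (\sum_(j in J) x j) ^+ 2 <= #|J|%:R * \sum_(j in J) x j ^+ 2.
Proof.
set S := \sum_(j in J) x j; set k := #|J|%:R.
have h : 0 <= \sum_(j in J) (k * x j - S) ^+ 2 by apply: sumr_ge0 => j _; apply: sqr_ge0.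
have e : \sum_(j in J) (k * x j - S) ^+ 2 = k * (k * \sum_(j in J) x j ^+ 2 - S ^+ 2).
  have ee : forall j, (k * x j - S) ^+ 2 = (k ^+ 2 * x j ^+ 2 - (2 * k * S) * x j) + S ^+ 2.
    by move=> j; ring.
  under eq_bigr do rewrite ee.
  rewrite big_split /= sumrB -!mulr_sumr sumr_const -/S -/k -mulr_natl -/k.
  ring.
have kge : 0 <= k by rewrite ler0n.
have := kge; rewrite le_eqVlt => /orP [/eqP k0 | kp].
  rewrite /S; move: k0; rewrite /k => /esym/eqP; rewrite pnatr_eq0 => /eqP/cards0_eq->.
  by rewrite !big_set0 expr0n /= mulr0.
rewrite e in h; rewrite -subr_ge0; by rewrite -(pmulr_rge0 _ kp).
Qed.

Lemma sum_sub (A B : pred 'I_q) (F : 'I_q -> R) :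
  (forall j, A j -> B j) -> (forall j, 0 <= F j) ->
  \sum_(j | A j) F j <= \sum_(j | B j) F j.
Proof.
move=> AB F0; rewrite [X in X <= _]big_mkcond [X in _ <= X]big_mkcond /=.
apply: ler_sum => j _; case: ifP => hA; first by rewrite AB.
by case: ifP.
Qed.

Lemma dotvB2 u a b : dotv u (a - b) = dotv u a - dotv u b.
Proof. by rewrite !dotvE -sumrB; apply: eq_bigr => j _; rewrite !mxE mulrBr. Qed.
End H.


Theorem mainTheorem2 (R : realType) (q : nat) (G : 'M[R]_q) (g bstar bhat : 'cV[R]_q)
  (w : 'I_q -> R) (lam alpha tau : R) :
  G^T = G ->
  (forall th : 'cV[R]_q, 0 <= qform G th) ->
  (exists j, j \notin supp bstar) ->
  (forall j, 0 <= w j) ->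
  (exists2 j, j \notin supp bstar & w j = 1) ->
  (forall j, j \notin supp bstar -> 1 <= w j) ->
  0 < lam ->
  (forall b : 'cV[R]_q, lasso_obj G g w lam bhat <= lasso_obj G g w lam b) ->
  norminf (g - G *m bstar) <= lam / 4 ->
  0 < alpha -> 0 <= tau ->
  (forall th : 'cV[R]_q, alpha * norm2 th ^+ 2 - tau * norm1 th ^+ 2 <= qform G th) ->
  let J := supp bstar in
  let k := #|J| in
  let rw := \big[Num.max/0]_(j in J) w j in
  4 * (1 + rw) ^+ 2 * k%:R * tau <= alpha / 2 ->
  [/\ norm2 (bhat - bstar) <= (1 + 2 * rw) / alpha * Num.sqrt k%:R * lam,
      norm1 (bhat - bstar) <= (2 + 6 * rw + 4 * rw ^+ 2) / alpha * k%:R * lam,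
      qform G (bhat - bstar) <= (1 + 2 * rw) ^+ 2 / (2 * alpha) * k%:R * lam ^+ 2,
      (forall s0 : R, J != set0 ->
         (exists2 j, j \in J & `|bstar j 0| = s0) ->
         (forall j, j \in J -> s0 <= `|bstar j 0|) ->
         #|J :\: supp bhat|%:R <= (2 + 6 * rw + 4 * rw ^+ 2) / (s0 * alpha) * k%:R * lam)
    & #|supp (hthresh lam bhat) :\: J|%:R <= (1 + 2 * rw) ^+ 2 * k%:R / alpha].

Proof.
move=> GT Gpsd _ w0 _ w1 lam0 opt einf alpha0 tau0 RE J k rw Hk.
have rw0 : 0 <= rw.
  by rewrite /rw; apply: (big_ind (fun x => 0 <= x)) => //= x y hx hy; rewrite le_max hx.
have wle : forall j, j \in J -> w j <= rw.
  by move=> j jJ; rewrite /rw; exact: le_bigmax_cond.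
have bJc : forall j, j \notin J -> bstar j 0 = 0.
  by move=> j; rewrite /J /supp inE negbK => /eqP.
set d := bhat - bstar.
set e := g - G *m bstar.
set SJ := \sum_(j | j \in J) `|d j 0|.
set SJc := \sum_(j | j \notin J) `|d j 0|.
have SJ0 : 0 <= SJ by apply: sumr_ge0.
have SJc0 : 0 <= SJc by apply: sumr_ge0.
have n1E : norm1 d = SJ + SJc by rewrite /norm1 (bigID (fun j => j \in J)).
set P := fun b : 'cV[R]_q => \sum_(j < q) w j * `|b j 0|.
have objE : lasso_obj G g w lam bhat - lasso_obj G g w lam bstar =
   qform G d - 2 * dotv d e + lam * (P bhat - P bstar).
  have -> : bhat = bstar + d by rewrite /d addrC subrK.
  rewrite /lasso_obj qform_add // dotvD /e dotvB2 -/(P _) -/(P bstar).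
  ring.
have dotb : `|dotv d e| <= lam / 4 * norm1 d.
  rewrite dotvE /norm1 mulr_sumr; apply: (le_trans (ler_norm_sum _ _ _)).
  apply: ler_sum => j _; rewrite normrM mulrC; apply: ler_wpM2r => //.
  apply: le_trans einf; exact: (le_bigmax _ (fun j => `|e j 0|) j).
have pen : SJc - rw * SJ <= P bhat - P bstar.
  rewrite /P -sumrB.
  have -> : SJc - rw * SJ =
     \sum_(j < q) (if j \in J then - (rw * `|d j 0|) else `|d j 0|).
    rewrite (bigID (fun j => j \in J)) /= addrC; congr (_ + _).
      by apply: eq_bigr => j jJ; rewrite (negbTE jJ).
    by rewrite /SJ mulr_sumr -sumrN; apply: eq_bigr => j ->.
  apply: ler_sum => j _; case: ifP => jJ.
    have h1 : `|bstar j 0| - `|bhat j 0| <= `|d j 0|.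
      rewrite /d !mxE; apply: le_trans (ler_norm _) _.
      rewrite [X in _ <= X]distrC; exact: ler_dist_dist.
    have := wle j jJ; have := w0 j; have := normr_ge0 (d j 0); nra.
  have := w1 j (negbT jJ); rewrite /d !mxE bJc ?jJ // oppr0 addr0 normr0 mulr0 subr0.
  have := normr_ge0 (bhat j 0); nra.
have Q0 := Gpsd d.
have basic : 2 * qform G d + lam * SJc <= lam * (2 * rw + 1) * SJ.
  have o := opt bstar. have : `|dotv d e| <= lam / 4 * (SJ + SJc) by rewrite -n1E.
  have := ler_wpM2l (ltW lam0) pen. rewrite ler_norml => h3 /andP [h1 h2].
  move: o; rewrite -subr_le0 objE => o. nra.
set N := \sum_(j < q) d j 0 ^+ 2.
have N0 : 0 <= N by apply: sumr_ge0 => j _; apply: sqr_ge0.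
set n := norm2 d.
have n0 : 0 <= n by apply: sqrtr_ge0.
have nN : n ^+ 2 = N by rewrite /n /norm2 sqr_sqrtr.
have k0 : 0 <= k%:R :> R by rewrite ler0n.
set sk := Num.sqrt (k%:R : R).
have sk0 : 0 <= sk by apply: sqrtr_ge0.
have skk : sk ^+ 2 = k%:R by rewrite /sk sqr_sqrtr.
have cs : SJ ^+ 2 <= k%:R * N.
  apply: (le_trans (@CS R q J (fun j => `|d j 0|))); apply: ler_wpM2l => //.
  rewrite /N (bigID (fun j => j \in J) _ (fun j => d j 0 ^+ 2)) /=.
  under eq_bigr do rewrite real_normK ?num_real //.
  by rewrite lerDl; apply: sumr_ge0 => j _; apply: sqr_ge0.
have SJn : SJ <= sk * n.
  have : SJ ^+ 2 <= (sk * n) ^+ 2 by rewrite exprMn skk nN.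
  have := mulr_ge0 sk0 n0. nra.
have cone : SJc <= (1 + 2 * rw) * SJ.
  have : lam * SJc <= lam * ((1 + 2 * rw) * SJ) by nra.
  by rewrite ler_pM2l.
have n1b : norm1 d <= 2 * (1 + rw) * SJ by rewrite n1E; lra.
have n1sq : norm1 d ^+ 2 <= 4 * (1 + rw) ^+ 2 * k%:R * N.
  have n10 : 0 <= norm1 d by apply: sumr_ge0.
  have : norm1 d ^+ 2 <= (2 * (1 + rw) * SJ) ^+ 2.
    by rewrite ler_sqr ?nnegrE //; nra.
  move=> h; apply: (le_trans h); rewrite !exprMn -mulrA.
  have h4 : 0 <= 4 * (1 + rw) ^+ 2 by apply: mulr_ge0 => //; apply: sqr_ge0.
  have := ler_wpM2l h4 cs; lra.
have Qlow : alpha / 2 * N <= qform G d.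
  have := RE d; rewrite -/n nN => h.
  have : tau * norm1 d ^+ 2 <= alpha / 2 * N.
    apply: (le_trans (ler_wpM2l tau0 n1sq)).
    have -> : tau * (4 * (1 + rw) ^+ 2 * k%:R * N) = (4 * (1 + rw) ^+ 2 * k%:R * tau) * N by ring.
    exact: ler_wpM2r.
  lra.
set c := (1 + 2 * rw) * sk * lam.
have c0 : 0 <= c by apply: mulr_ge0; [apply: mulr_ge0 => //; lra | lra].
have hSJ : lam * (2 * rw + 1) * SJ <= c * n.
  have : lam * (2 * rw + 1) * SJ <= lam * (2 * rw + 1) * (sk * n).
    by apply: ler_wpM2l => //; apply: mulr_ge0; lra.
  move=> h; apply: (le_trans h); rewrite /c le_eqVlt; apply/orP; left; apply/eqP; ring.
have lSJc : 0 <= lam * SJc by apply: mulr_ge0 => //; lra.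
have key : alpha * N <= c * n by lra.
have an : alpha * n <= c.
  have := n0; rewrite le_eqVlt => /orP [/eqP <- | np]; first by rewrite mulr0.
  rewrite -nN in key. have : alpha * n * n <= c * n by rewrite -mulrA -expr2.
  by rewrite ler_pM2r.
have cn : c * n <= c ^+ 2 / alpha.
  rewrite ler_pdivlMr // expr2 -mulrA; apply: ler_wpM2l => //; lra.
have c2 : c ^+ 2 = (1 + 2 * rw) ^+ 2 * k%:R * lam ^+ 2 by rewrite /c !exprMn skk; ring.
have n1a : norm1 d * alpha <= (2 + 6 * rw + 4 * rw ^+ 2) * k%:R * lam.
  have h1 : norm1 d * alpha <= 2 * (1 + rw) * sk * (alpha * n).
    have : norm1 d * alpha <= 2 * (1 + rw) * (sk * n) * alpha.
      apply: ler_wpM2r; [lra|]; apply: (le_trans n1b); apply: ler_wpM2l => //; lra.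
    move=> h; apply: (le_trans h); rewrite le_eqVlt; apply/orP; left; apply/eqP; ring.
  apply: (le_trans h1).
  have -> : (2 + 6 * rw + 4 * rw ^+ 2) * k%:R * lam = 2 * (1 + rw) * sk * c.
    by rewrite /c -skk; ring.
  apply: ler_wpM2l => //; apply: mulr_ge0 => //; lra.
have SJca : SJc * alpha <= (1 + 2 * rw) ^+ 2 * k%:R * lam.
  have : lam * SJc <= c ^+ 2 / alpha.
    apply: le_trans cn; lra.
  rewrite c2 ler_pdivlMr // => h.
  have : lam * (SJc * alpha) <= lam * ((1 + 2 * rw) ^+ 2 * k%:R * lam).
    by rewrite [X in X <= _]mulrA; apply: (le_trans h); rewrite le_eqVlt; apply/orP; left; apply/eqP; ring.
  by rewrite ler_pM2l.
split.
- rewrite -/d -/n.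
  have -> : (1 + 2 * rw) / alpha * sk * lam = c / alpha.
    by rewrite /c; field; rewrite gt_eqF.
  by rewrite ler_pdivlMr // mulrC.
- rewrite -/d.
  have -> : (2 + 6 * rw + 4 * rw ^+ 2) / alpha * k%:R * lam
      = (2 + 6 * rw + 4 * rw ^+ 2) * k%:R * lam / alpha by field; rewrite gt_eqF.
  by rewrite ler_pdivlMr.
- rewrite -/d.
  have -> : (1 + 2 * rw) ^+ 2 / (2 * alpha) * k%:R * lam ^+ 2 = c ^+ 2 / alpha / 2.
    by rewrite c2; field; rewrite gt_eqF.
  rewrite ler_pdivlMr //; apply: le_trans cn.
  have := mulr_ge0 c0 n0; have := ler_wpM2l (mulr_ge0 (ler0n _ 2) (ltW lam0)) (mulr_ge0 (ler0n _ 2) (ltW lam0)). nra.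
- move=> s0 _ [j0 j0J <-] smin.
  set m := #|J :\: supp bhat|.
  have s0p : 0 < `|bstar j0 0|.
    by rewrite normr_gt0; move: j0J; rewrite /J /supp inE.
  have cnt : m%:R * `|bstar j0 0| <= norm1 d.
    rewrite /m -sumr_const /norm1.
    apply: (le_trans _ (@sum_sub R q (fun j => j \in J :\: supp bhat) predT (fun j => `|d j 0|) _ _)) => //.
    rewrite mulr_suml; apply: ler_sum => j; rewrite mul1r in_setD => /andP [hb jJ]; move: hb; rewrite /supp inE negbK => /eqP hb.
    rewrite /d !mxE hb add0r normrN; exact: smin.
  rewrite -/k.
  have -> : (2 + 6 * rw + 4 * rw ^+ 2) / (`|bstar j0 0| * alpha) * k%:R * lam
      = (2 + 6 * rw + 4 * rw ^+ 2) * k%:R * lam / alpha / `|bstar j0 0|.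
    by field; rewrite !gt_eqF.
  rewrite ler_pdivlMr // ler_pdivlMr //.
  apply: le_trans n1a; apply: ler_wpM2r => //; lra.
- set m := #|supp (hthresh lam bhat) :\: J|.
  have cnt : m%:R * lam <= SJc.
    rewrite /m -sumr_const /SJc.
    apply: (le_trans _ (@sum_sub R q (fun j => j \in supp (hthresh lam bhat) :\: J) (fun j => j \notin J) (fun j => `|d j 0|) _ _)) => //.
    + rewrite mulr_suml; apply: ler_sum => j; rewrite mul1r in_setD => /andP [jJ].
      rewrite /supp inE mxE /d !mxE bJc // oppr0 addr0; case: ifP => [h _|_]; [exact: ltW | by rewrite eqxx].
    + by move=> j; rewrite in_setD => /andP [].
  rewrite ler_pdivlMr //.
  have : m%:R * alpha * lam <= (1 + 2 * rw) ^+ 2 * k%:R * lam.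
    apply: le_trans SJca; rewrite mulrAC; apply: ler_wpM2r; lra.
  by rewrite ler_pM2r.
Qed.
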